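(* Let $m \ge 2$, let $\varepsilon \le \frac{1}{2^{3m}\cdot 4m}$ be a power of 2, and let $\mathcal{G} = \{2^{-i}\varepsilon j : i \in \mathbb{Z},\ j \in \{1,\dots,2/\varepsilon^2 - 1\}\} \cap (0,1)$. Suppose $z, x_1,\dots,x_m \in \mathcal{G}$, let $M = \max_i x_i$, and suppose $\varepsilon M \le z \le \min_i x_i$. Then there exist $a_1,\dots,a_m,b_1,\dots,b_m$ such that for every $i$: (i) $a_i, b_i \in \mathcal{G} \cup \{0\}$; (ii) $x_i = z + a_i + b_i$; (iii) each of $a_i, b_i$ is either $0$ or at least $\varepsilon^3 M/2$; and (iv) $a_i \le \varepsilon z$. *)

(* Defs.v *)
From HB Require Import structures.
From mathcomp Require Import all_boot all_order all_algebra.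
Set Implicit Arguments. Unset Strict Implicit. Unset Printing Implicit Defensive.
Import Order.TTheory GRing.Theory Num.Theory.
Local Open Scope ring_scope.

Definition pow2 {R : realFieldType} (eps : R) : Prop :=
  exists k : int, eps = (2%:R : R) ^ k.

Definition grid {R : realFieldType} (eps : R) (x : R) : Prop :=
  (exists (i : int) (j : nat),
      (1 <= j)%N /\ (j%:R <= 2 / eps ^+ 2 - 1) /\
      x = (2%:R : R) ^ (- i) * eps * j%:R)
  /\ 0 < x /\ x < 1.

(* Main.v *)
Require Import Defs.
From HB Require Import structures.
From mathcomp Require Import all_boot all_order all_algebra.
From mathcomp Require Import zify ring lra.
Import Order.TTheory GRing.Theory Num.Theory.
Local Open Scope ring_scope.

Lemma eps_inv (R : realFieldType) (K : nat) (eps : R) :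
  eps = 2%:R ^ (- (K%:Z)) -> eps = ((2 ^ K)%:R)^-1.
Proof. by move=> ->; rewrite -exprnN natrX. Qed.

Lemma N_eq (R : realFieldType) (K : nat) (eps : R) :
  eps = 2%:R ^ (- (K%:Z)) -> 2 / eps ^+ 2 = (2 ^ (2 * K + 1))%:R.
Proof.
move=> /eps_inv ->; rewrite exprVn invrK -natrX -natrM; apply: congr1.
by rewrite -expnM -expnS addn1 mulnC.
Qed.

Arguments N_eq {R K eps}.
Arguments eps_inv {R K eps}.

Lemma grid_build (R : realFieldType) (K : nat) (eps y : R) (p : int) (n : nat) :
  eps = 2%:R ^ (- (K%:Z)) -> 0 < y -> y < 1 -> y = 2%:R ^ p * n%:R ->
  (n < 2 ^ (2 * K + 1))%N -> grid eps y.
Proof.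
move=> he y0 y1 hy hn; split=> //; exists (- p - K%:Z), n; split.
  by case: n hy {hn} => [|n] hy //; move: y0; rewrite hy mulr0 ltxx.
split.
  rewrite (N_eq he) -(@natrB R _ 1%N); last by rewrite expn_gt0.
  by rewrite ler_nat; lia.
rewrite hy he -expfzDr ?pnatr_eq0 //; congr (_ ^ _ * _); lia.
Qed.

Arguments grid_build {R K eps y} p n.

Lemma grid_dec (R : realFieldType) (K : nat) (eps y : R) :
  eps = 2%:R ^ (- (K%:Z)) -> grid eps y ->
  exists (p : int) (n : nat), y = 2%:R ^ p * n%:R /\ (n < 2 ^ (2 * K + 1))%N.
Proof.
move=> he [[i [j [j1 [hj ->]]]] _]; exists (- i - K%:Z), j; split.
  rewrite he -expfzDr ?pnatr_eq0 //.
move: hj; rewrite (N_eq he) -(@natrB R _ 1%N) ?expn_gt0 // ler_nat; lia.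
Qed.

Lemma common (R : realFieldType) (y1 y2 : R) p1 p2 (n1 n2 : nat) :
  y1 = 2%:R ^ p1 * n1%:R -> y2 = 2%:R ^ p2 * n2%:R ->
  exists e (X1 X2 : nat), y1 = 2%:R ^ e * X1%:R /\ y2 = 2%:R ^ e * X2%:R /\
   (X1 = n1 \/ X2 = n2).
Proof.
have key : forall (y1 y2 : R) p1 p2 (n1 n2 : nat), (p1 <= p2) ->
  y1 = 2%:R ^ p1 * n1%:R -> y2 = 2%:R ^ p2 * n2%:R ->
  exists e (X1 X2 : nat), y1 = 2%:R ^ e * X1%:R /\ y2 = 2%:R ^ e * X2%:R /\
   (X1 = n1 \/ X2 = n2).
  move=> a1 a2 q1 q2 m1 m2 hq h1 h2.
  have [d hd] : exists d : nat, q2 = q1 + d%:Z.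
    by exists `|q2 - q1|%N; lia.
  exists q1, m1, (2 ^ d * m2)%N; split=> //; split; last by left.
  by rewrite h2 hd expfzDr ?pnatr_eq0 // -exprnP natrM natrX mulrA.
move=> h1 h2; case: (lerP p1 p2) => hp.
  exact: key hp h1 h2.
have [e [X1 [X2 [a [b c]]]]] := key _ _ _ _ _ _ (ltW hp) h2 h1.
by exists e, X2, X1; split=> //; split=> //; case: c; auto.
Qed.

Lemma core (R : realFieldType) (K : nat) (e : int) (X Z : nat) (eps z x M : R) :
  eps = 2%:R ^ (- (K%:Z)) -> x = 2%:R ^ e * X%:R -> z = 2%:R ^ e * Z%:R ->
  (0 < Z)%N -> (Z <= X)%N -> (Z < 2 ^ (2 * K + 1))%N -> x < 1 ->
  eps * M <= z -> x <= M ->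
  exists a b : R, (grid eps a \/ a = 0) /\ (grid eps b \/ b = 0) /\
    x = z + a + b /\
    (a = 0 \/ eps ^+ 3 * M / 2%:R <= a) /\
    (b = 0 \/ eps ^+ 3 * M / 2%:R <= b) /\
    a <= eps * z.
Proof.
move=> he hx hz Z0 ZX ZN x1 eM xM.
set w : R := 2%:R ^ e.
have w0 : 0 < w by rewrite exprz_gt0 // ltr0n.
set E : R := (2 ^ K)%:R.
have E0 : 0 < E by rewrite ltr0n expn_gt0.
have heE : eps = E^-1 by rewrite (eps_inv he).
have eps0 : 0 < eps by rewrite heE invr_gt0.
have epsE : eps * E = 1 by rewrite heE mulVf // gt_eqF.
set t := trunc_log 2 Z.
have [ht1 ht2] : (2 ^ t <= Z)%N /\ (Z < 2 ^ t.+1)%N.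
  by have /andP[] := trunc_log_bounds (isT : (1 < 2)%N) Z0.
set s := (t - K)%N.
set U := (2 ^ s)%N.
have U0 : (0 < U)%N by rewrite expn_gt0.
set D := (X - Z)%N.
set A := (D %% U)%N.
set Q := (D %/ U)%N.
have AU : (A < U)%N by rewrite ltn_pmod.
have hX : X = (Z + Q * U + A)%N.
  have hD : D = (Q * U + A)%N by rewrite /Q /A -divn_eq.
  by rewrite -addnA -hD /D subnKC.
have hUK : (A != 0)%N -> (U * 2 ^ K <= Z)%N.
  move=> A0.
  have s0 : (0 < s)%N.
    case: (posnP s) => // s0.
    by move: AU; rewrite /U s0 expn0 ltnS leqn0 (negbTE A0).
  have Kt : (K <= t)%N by apply: ltnW; rewrite -subn_gt0.
  by rewrite /U -expnD subnK.
have hZ2 : (Z * 2 ^ K <= U * 2 ^ (2 * K + 1))%N.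
  have : (Z <= 2 ^ (K + 1 + s))%N.
    apply: leq_trans (ltnW ht2) _; rewrite leq_pexp2l // addn1 addSn ltnS -leq_subLR //.
  rewrite /U !expnD => h.
  rewrite expn1 expn0 in h *.
  rewrite muln1; apply: leq_trans (leq_mul h (leqnn (2 ^ K))) _.
  by apply/eq_leq; ring.
have hw2 : 2%:R ^ (e + s%:Z) = w * U%:R :> R.
  by rewrite expfzDr ?pnatr_eq0 // -exprnP natrX.
have weps : eps ^+ 3 * M / 2%:R <= w.
  have h1 : eps ^+ 3 * M / 2%:R <= z * (eps ^+ 2 / 2%:R).
    rewrite (_ : eps ^+ 3 * M / 2%:R = (eps * M) * (eps ^+ 2 / 2%:R)); last by ring.
    by rewrite ler_wpM2r // divr_ge0 // ?exprn_ge0 ?ltW.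
  apply: le_trans h1 _.
  have h2 : z <= w * (2 ^ (2 * K + 1))%:R.
    by rewrite hz ler_pM2l // ler_nat ltnW.
  apply: le_trans (ler_wpM2r _ h2) _; first by rewrite divr_ge0 // ?exprn_ge0 ?ltW.
  rewrite -(N_eq he).
  have -> : w * (2 / eps ^+ 2) * (eps ^+ 2 / 2%:R) = w.
    by field; rewrite ?expf_neq0 ?gt_eqF ?pnatr_eq0 ?andbT.
  by [].
have ME : M <= z * E.
  by rewrite -[M]mul1r -epsE mulrAC ler_wpM2r // ltW.
have z0 : 0 < z by rewrite hz mulr_gt0 // ltr0n.
have aez : w * A%:R <= eps * z.
  case: (eqVneq A 0%N) => [->|A0]; first by rewrite mulr0 mulr_ge0 // ltW.
  have hw : w * A%:R = eps * (w * (A * 2 ^ K)%:R).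
    transitivity (w * A%:R * (eps * E)); first by rewrite epsE mulr1.
    by rewrite natrM -/E; ring.
  rewrite hw ler_pM2l // hz ler_pM2l // ler_nat.
  apply: leq_trans (hUK A0); exact: leq_mul (ltnW AU) (leqnn _).
have zx : z <= x by rewrite hx hz ler_pM2l // ler_nat.
have ez1 : eps * z < 1.
  apply: le_lt_trans x1; apply: le_trans zx.
  rewrite ger_pMl // heE invr_le1 // ?unitfE ?gt_eqF //.
  by rewrite /E ler1n expn_gt0.
have hxe : x = z + w * A%:R + 2%:R ^ (e + s%:Z) * Q%:R.
  by rewrite hw2 hx hz hX !natrD natrM /w; ring.
exists (w * A%:R), (2%:R ^ (e + s%:Z) * Q%:R).
have a0 : 0 <= w * A%:R by rewrite mulr_ge0 // ltW.
have b_lt : 2%:R ^ (e + s%:Z) * Q%:R < x by rewrite hxe; lra.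
have wU0 : 0 < w * U%:R by rewrite mulr_gt0 // ltr0n.
split.
  case: (eqVneq A 0%N) => [->|A0]; first by right; rewrite mulr0.
  left; apply: (grid_build e A he) => //.
  - by rewrite mulr_gt0 // ltr0n lt0n.
  - exact: le_lt_trans aez ez1.
  - apply: leq_trans AU _; apply: leq_trans (ltnW ZN); apply: leq_trans (hUK A0).
    by rewrite leq_pmulr // expn_gt0.
split.
  case: (eqVneq Q 0%N) => [->|Q0]; first by right; rewrite mulr0.
  left; apply: (grid_build (e + s%:Z) Q he) => //.
  - by rewrite mulr_gt0 ?ltr0n ?lt0n // exprz_gt0 // ltr0n.
  - exact: lt_trans b_lt x1.
  - have h1 : Q%:R * (w * U%:R) < (2 ^ (2 * K + 1))%N%:R * (w * U%:R).
      rewrite mulrC -hw2; apply: lt_le_trans b_lt _; apply: le_trans xM _.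
      apply: le_trans ME _; rewrite hz /E -mulrA -natrM hw2 -/w mulrCA -natrM.
      by rewrite ler_pM2l // ler_nat; apply: leq_trans hZ2 _; rewrite mulnC.
    by move: h1; rewrite ltr_pM2r // ltr_nat.
split; first exact: hxe.
split.
  case: (eqVneq A 0%N) => [->|A0]; first by left; rewrite mulr0.
  right; apply: le_trans weps _; rewrite ler_pMr // ler1n lt0n; exact: A0.
split; last exact: aez.
case: (eqVneq Q 0%N) => [->|Q0]; first by left; rewrite mulr0.
right; apply: le_trans weps _; rewrite hw2 -mulrA ler_pMr // -natrM ler1n.
by rewrite muln_gt0 U0 lt0n.
Qed.

Arguments core {R K e X Z eps z x M}.
Arguments common {R y1 y2 p1 p2 n1 n2}.
Arguments grid_dec {R K eps y}.

Theorem claim7 (R : realFieldType) (m : nat) (eps z M : R) (x : 'I_m -> R) :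
  (2 <= m)%N ->
  pow2 eps ->
  eps <= 1 / ((2%:R) ^+ (3 * m) * (4 * m)%:R) ->
  grid eps z ->
  (forall i, grid eps (x i)) ->
  (exists i, M = x i) -> (forall i, x i <= M) ->
  eps * M <= z -> (forall i, z <= x i) ->
  exists a b : 'I_m -> R, forall i,
    (grid eps (a i) \/ a i = 0) /\ (grid eps (b i) \/ b i = 0) /\
    x i = z + a i + b i /\
    (a i = 0 \/ eps ^+ 3 * M / 2%:R <= a i) /\
    (b i = 0 \/ eps ^+ 3 * M / 2%:R <= b i) /\
    a i <= eps * z.
Proof.
move=> m2 [k hk] heps hz hx _ xM eM zx.
have eps1 : eps < 1.
  apply: le_lt_trans heps _.
  rewrite -natrX -natrM div1r invf_lt1 ?ltr0n ?muln_gt0 ?expn_gt0 //; last by lia.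
  rewrite ltr1n; apply: leq_trans (_ : (1 < 4 * m)%N) _; first by lia.
  by apply: leq_pmull; rewrite expn_gt0.
have [K he] : exists K : nat, eps = 2%:R ^ (- (K%:Z)).
  case: k hk => n hk.
    exfalso; move: eps1; rewrite hk -exprnP.
    by rewrite ltNge exprn_ege1 // ler1n.
  by exists n.+1; rewrite hk NegzE.
have H : forall i, exists ab : R * R,
    (grid eps ab.1 \/ ab.1 = 0) /\ (grid eps ab.2 \/ ab.2 = 0) /\
    x i = z + ab.1 + ab.2 /\
    (ab.1 = 0 \/ eps ^+ 3 * M / 2%:R <= ab.1) /\
    (ab.2 = 0 \/ eps ^+ 3 * M / 2%:R <= ab.2) /\
    ab.1 <= eps * z.
  move=> i.
  have [pz [nz [hzr hnz]]] := grid_dec he hz.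
  have [px [nx [hxr hnx]]] := grid_dec he (hx i).
  have [e [X [Z [hX [hZ c]]]]] := common hxr hzr.
  have w0 : 0 < 2%:R ^ e :> R by rewrite exprz_gt0 // ltr0n.
  have ZX : (Z <= X)%N by have := zx i; rewrite hX hZ ler_pM2l // ler_nat.
  have Z0 : (0 < Z)%N.
    by have := (hz.2.1); rewrite hZ pmulr_rgt0 // ltr0n.
  have ZN : (Z < 2 ^ (2 * K + 1))%N.
    case: c => [hXn|hZn]; last by rewrite hZn.
    by rewrite -hXn in hnx; exact: leq_ltn_trans ZX hnx.
  have [a [b Hab]] := core he hX hZ Z0 ZX ZN (hx i).2.2 eM (xM i).
  by exists (a, b).
have [f hf] := fin_all_exists H.
by exists (fun i => (f i).1), (fun i => (f i).2).
Qed.
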